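(* Let $b$ be a topologically nilpotent element of a complex Banach algebra. Then $b$ is nilpotent if and only if $e^b-1$ is nilpotent. Moreover, for every $d\in\mathbb{N}$, $b^d=0$ if and only if $(e^b-1)^d=0$.
   Context: An element $b$ of a Banach algebra is topologically nilpotent if $\|b^n\|^{1/n}\to0$ as $n\to\infty$. $e^b=\sum_{n\ge0}b^n/n!$, computed in the algebra or in its unitization. *)

(* Defs.v *)
From HB Require Import structures.
From mathcomp Require Import all_boot all_order all_algebra.
From mathcomp Require Import all_classical all_reals all_analysis.
From mathcomp.real_closed Require Import complex.
Set Implicit Arguments. Unset Strict Implicit. Unset Printing Implicit Defensive.
Import Order.TTheory GRing.Theory Num.Theory.
Import numFieldNormedType.Exports.
Local Open Scope ring_scope.

HB.instance Definition _ (R : rcfType) := NormedModule.copy R[i] R[i]^o.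
Local Open Scope complex_scope.
Local Open Scope classical_set_scope.

Definition banach_mul (R : realType) (A : completeNormedModType R[i])
    (mul : A -> A -> A) : Prop :=
  [/\ associative mul,
      (forall (a : R[i]) (x y z : A), mul (a *: x + y) z = a *: mul x z + mul y z),
      (forall (a : R[i]) (x y z : A), mul z (a *: x + y) = a *: mul z x + mul z y)
    & (forall x y : A, `|mul x y| <= `|x| * `|y|)].

(* The unitization C x A: (l, x) stands for l*1 + x. *)
Definition umul (R : realType) (A : completeNormedModType R[i])
    (mul : A -> A -> A) (x y : R[i] * A) : R[i] * A :=
  (x.1 * y.1, x.1 *: y.2 + y.1 *: x.2 + mul x.2 y.2).

Definition upow (R : realType) (A : completeNormedModType R[i])
    (mul : A -> A -> A) (x : R[i] * A) (n : nat) : R[i] * A :=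
  iter n (umul mul x) (1, 0).

Definition bpow (R : realType) (A : completeNormedModType R[i])
    (mul : A -> A -> A) (b : A) (n : nat) : R[i] * A :=
  upow mul (0, b) n.

Definition topologically_nilpotent (R : realType) (A : completeNormedModType R[i])
    (mul : A -> A -> A) (b : A) : Prop :=
  (fun n : nat => n.-root `|(bpow mul b n).2|) @ \oo --> (0 : R[i]).

Definition nilpotent_el (R : realType) (A : completeNormedModType R[i])
    (mul : A -> A -> A) (b : A) : Prop :=
  exists n : nat, bpow mul b n = (0, 0).

(* e^b - 1 = sum_{n>=1} b^n / n!, an element of A
   (the n = 0 term (bpow mul b 0).2 is 0). *)
Definition expm1 (R : realType) (A : completeNormedModType R[i])
    (mul : A -> A -> A) (b : A) : A :=
  limn (series (fun n : nat => (n`!%:R : R[i])^-1 *: (bpow mul b n).2)).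

(* Main.v *)
Require Import Defs.
From HB Require Import structures.
From mathcomp Require Import all_boot all_order all_algebra.
From mathcomp Require Import all_classical all_reals all_analysis.
From mathcomp.real_closed Require Import complex.
Import Order.TTheory GRing.Theory Num.Theory.
Import numFieldNormedType.Exports.
Local Open Scope ring_scope.
Local Open Scope complex_scope.
Local Open Scope classical_set_scope.
Set Implicit Arguments. Unset Strict Implicit. Unset Printing Implicit Defensive.

Section Basic.
Variables (R : realType) (A : completeNormedModType R[i]) (mul : A -> A -> A).
Hypothesis hmul : banach_mul mul.

Lemma mDl x y z : mul (x + y) z = mul x z + mul y z.
Proof. move: hmul; rewrite /banach_mul => -[_ h _ _]. by have := h 1 x y z; rewrite !scale1r. Qed.
Lemma mDr x y z : mul z (x + y) = mul z x + mul z y.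
Proof. move: hmul; rewrite /banach_mul => -[_ _ h _]. by have := h 1 x y z; rewrite !scale1r. Qed.
Lemma m0l z : mul 0 z = 0.
Proof.
have := mDl 0 0 z; rewrite addr0 -{1}[mul 0 z]addr0 => /addrI; done.
Qed.
Lemma m0r z : mul z 0 = 0.
Proof.
have := mDr 0 0 z; rewrite addr0 -{1}[mul z 0]addr0 => /addrI; done.
Qed.
Lemma mZl a x z : mul (a *: x) z = a *: mul x z.
Proof. move: hmul; rewrite /banach_mul => -[_ h _ _]. by have := h a x 0 z; rewrite !addr0 m0l addr0. Qed.
Lemma mZr a x z : mul z (a *: x) = a *: mul z x.
Proof. move: hmul; rewrite /banach_mul => -[_ _ h _]. by have := h a x 0 z; rewrite !addr0 m0r addr0. Qed.
Lemma mNl x z : mul (- x) z = - mul x z.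
Proof. by rewrite -scaleN1r mZl scaleN1r. Qed.
Lemma mNr x z : mul z (- x) = - mul z x.
Proof. by rewrite -scaleN1r mZr scaleN1r. Qed.
Lemma mBl x y z : mul (x - y) z = mul x z - mul y z.
Proof. by rewrite mDl mNl. Qed.
Lemma mBr x y z : mul z (x - y) = mul z x - mul z y.
Proof. by rewrite mDr mNr. Qed.
Lemma mA : associative mul. Proof. by move: hmul; rewrite /banach_mul => -[]. Qed.
Lemma m_norm x y : `|mul x y| <= `|x| * `|y|. Proof. by move: hmul; rewrite /banach_mul => -[]. Qed.
Lemma m_sumr I (r : seq I) P (F : I -> A) z :
  mul z (\sum_(i <- r | P i) F i) = \sum_(i <- r | P i) mul z (F i).
Proof. by apply: (big_morph (mul z)); [move=> u v; exact: mDr| exact: m0r]. Qed.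

Lemma gen7 (V : zmodType) (p q r s t u w : V) :
  p+q+r+s+(t+u+w) = p+(q+s+u)+(r+t+w).
Proof.
rewrite -!addrA; congr (p + (q + _)).
by rewrite (addrCA r s) (addrCA t u) (addrCA r u).
Qed.

Lemma gen6 (V : zmodType) (p q r s t u : V) :
  (p+q)+(r+s)+(t+u) = (p+r+t)+(q+s+u).
Proof. by rewrite (addrACA p q r s) (addrACA (p+r) (q+s) t u). Qed.

Lemma m_suml I (r : seq I) P (F : I -> A) z :
  mul (\sum_(i <- r | P i) F i) z = \sum_(i <- r | P i) mul (F i) z.
Proof. by apply: (big_morph (mul^~ z)); [move=> x y; exact: mDl| exact: m0l]. Qed.

Lemma umulA : associative (umul mul).
Proof.
move=> [a x] [b y] [c z]; rewrite /umul /=; congr (_, _); first by rewrite mulrA.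
rewrite !scalerDr !mDl !mDr !mZl !mZr !scalerA mA.
by rewrite (mulrC c a) (mulrC c b) gen7.
Qed.

End Basic.

Definition UT (R : realType) (A : completeNormedModType R[i]) (mul : A -> A -> A)
  (hmul : banach_mul mul) : Type := (R[i] * A)%type.
Arguments UT {R A mul} hmul.

HB.instance Definition _ R A mul hmul := GRing.Zmodule.copy (@UT R A mul hmul) (R[i] * A)%type.

Section Ring.
Variables (R : realType) (A : completeNormedModType R[i]) (mul : A -> A -> A).
Hypothesis hmul : banach_mul mul.
Local Notation U := (UT hmul).

Let umul1l : left_id ((1, 0) : U) (umul mul).
Proof. by move=> [a x]; rewrite /umul /= mul1r scale1r scaler0 (m0l hmul) !addr0. Qed.
Let umul1r : right_id ((1, 0) : U) (umul mul).
Proof. by move=> [a x]; rewrite /umul /= mulr1 scale1r scaler0 (m0r hmul) add0r addr0. Qed.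
Let umulDl : left_distributive (umul mul : U -> U -> U) +%R.
Proof.
move=> [a x] [b y] [c z]; rewrite /umul /=; congr (_, _); first by rewrite mulrDl.
by rewrite scalerDl scalerDr (mDl hmul) gen6.
Qed.
Let umulDr : right_distributive (umul mul : U -> U -> U) +%R.
Proof.
move=> [a x] [b y] [c z]; rewrite /umul /=; congr (_, _); first by rewrite mulrDr.
by rewrite scalerDl scalerDr (mDr hmul) /= gen6.
Qed.
Let uone_neq0 : ((1, 0) : U) != 0.
Proof. by apply/eqP => -[] /eqP; rewrite oner_eq0. Qed.

HB.instance Definition _ := GRing.Zmodule_isNzRing.Build U (umulA hmul) umul1l umul1r umulDl umulDr uone_neq0.
End Ring.

Section T.
Variables (R : realType) (A : completeNormedModType R[i]) (mul : A -> A -> A).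
Hypothesis hmul : banach_mul mul.
Local Notation U := (UT hmul).
Lemma upowE (x : U) n : upow mul x n = x ^+ n.
Proof. elim: n => [//|n IH]; rewrite exprS -IH //. Qed.
End T.

Section Norm.
Variables (R : realType) (A : completeNormedModType R[i]) (mul : A -> A -> A).
Hypothesis hmul : banach_mul mul.
Local Notation U := (UT hmul).
Definition N (x : U) : R[i] := `|x.1| + `|x.2|.
Lemma N_ge0 x : 0 <= N x. Proof. by rewrite addr_ge0. Qed.
Lemma N_mul (x y : U) : N (x * y) <= N x * N y.
Proof.
case: x y => [a x] [b y]; rewrite /N /= normrM.
rewrite mulrDl !mulrDr -!addrA lerD2l.
apply: (le_trans (ler_normD _ _)); apply: lerD; first by rewrite normrZ.
apply: (le_trans (ler_normD _ _)); apply: lerD; first by rewrite normrZ mulrC.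
exact: (m_norm hmul).
Qed.
Lemma N1 : N (1 : U) = 1.
Proof. by rewrite /N /= normr1 normr0 addr0. Qed.
Lemma N_exp (x : U) k : N (x ^+ k) <= N x ^+ k.
Proof.
elim: k => [|k IH]; first by rewrite !expr0 N1.
rewrite !exprS; apply: (le_trans (N_mul _ _)); apply: ler_wpM2l => //; exact: N_ge0.
Qed.
Lemma N_eq0 (x : U) : N x = 0 -> x = 0.
Proof.
case: x => [a x]; rewrite /N /= => /eqP; rewrite paddr_eq0 // => /andP[].
by rewrite !normr_eq0 => /eqP-> /eqP->.
Qed.
End Norm.

Lemma alg (T : nzRingType) (B Q : T) d : GRing.comm B Q ->
  exists P, GRing.comm B P /\ (B * (1 + B * Q)) ^+ d = B ^+ d + B ^+ d * (B * P).
Proof.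
move=> cBQ; set G := 1 + B * Q.
have cBG : GRing.comm B G by apply: commrD; [exact: commr1| apply: commrM].
exists (Q * \sum_(i < d) G ^+ i); split.
  by apply: commrM => //; apply: commr_sum => i _; apply: commrX.
rewrite exprMn_comm // -{2}[B ^+ d]mulr1 -mulrDr; congr (_ * _).
have h := subrX1 G d; have e : G - 1 = B * Q by rewrite /G addrAC subrr add0r.
by rewrite e in h; rewrite mulrA -h addrC subrK.
Qed.

Lemma lip_cvg (R : realType) (A : completeNormedModType R[i]) (f : A -> A) (C : R[i])
  (s : nat -> A) (l : A) : 0 <= C -> (forall x, `|f l - f x| <= C * `|l - x|) ->
  s @ \oo --> l -> (f \o s) @ \oo --> f l.
Proof.
move=> C0 hf hs; apply/cvgrPdist_lt => e e0.
have C1 : 0 < C + 1 by rewrite ltr_wpDl.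
have := (cvgrPdist_lt _ _).1 hs (e / (C + 1)) (divr_gt0 e0 C1).
move=> h; near=> n.
have hn : `|l - s n| < e / (C + 1) by near: n; exact: h.
rewrite /=; apply: (le_lt_trans (hf _)).
apply: (le_lt_trans (ler_wpM2l C0 (ltW hn))).
rewrite mulrCA -[X in _ < X]mulr1 ltr_pM2l // ltr_pdivrMr // mul1r.
by rewrite ltrDl ltr01.
Unshelve. all: by end_near.
Qed.

Section Main.
Variables (R : realType) (A : completeNormedModType R[i]) (mul : A -> A -> A).
Hypothesis hmul : banach_mul mul.
Variable b : A.
Hypothesis htn : topologically_nilpotent mul b.
Local Notation U := (UT hmul).
Let B : U := (0, b).
Let p n := (bpow mul b n).2.

Lemma bpowE n : bpow mul b n = B ^+ n.
Proof. exact: upowE. Qed.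
Lemma bpow1 n : (bpow mul b n.+1).1 = 0.
Proof. by rewrite /bpow /upow iterS /umul /= mul0r. Qed.
Lemma bpowS n : bpow mul b n.+1 = (0, p n.+1).
Proof. by rewrite {1}[bpow mul b n.+1]surjective_pairing bpow1. Qed.
Lemma p0 : p 0 = 0. Proof. by []. Qed.
Lemma p1 : p 1 = b.
Proof. by rewrite /p /bpow /upow /= /umul /= scaler0 scale1r (m0r hmul) add0r addr0. Qed.
Lemma pSS n : p n.+2 = mul b (p n.+1).
Proof.
rewrite /p {1}/bpow /upow iterS -/(upow _ _ _) -/(bpow _ _ _) bpowS /umul /=.
by rewrite !scale0r !add0r.
Qed.
Lemma pcomm n : mul b (p n) = mul (p n) b.
Proof.
case: n => [|n]; first by rewrite p0 (m0r hmul) (m0l hmul).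
have := congr1 snd (commrX n.+1 (commr_refl B)).
rewrite -bpowE bpowS /GRing.mul /= /umul /=.
by rewrite !scale0r !add0r.
Qed.

Lemma tn_bound d : 0 < d -> \forall n \near \oo, `|p n| <= d ^+ n.
Proof.
move=> d0; have h := (cvgrPdist_lt _ _).1 htn d d0.
near=> n.
have n0 : (0 < n)%N by near: n; exact: nbhs_infty_gt.
have hn : `|0 - n.-root `|p n| | < d by near: n; exact: h.
move: hn; rewrite sub0r normrN ger0_norm ?rootC_ge0 // => hn.
have -> : `|p n| = (n.-root `|p n|) ^+ n by rewrite rootCK.
rewrite lerXn2r // ?ltW // nnegrE ?rootC_ge0 // ltW //.
Unshelve. all: by end_near.
Qed.

Let u n := (n`!%:R : R[i])^-1 *: p n.
Let v m := ((m.+3)`!%:R : R[i])^-1 *: p m.+1.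
Let q : R[i] := (2`!%:R)^-1.
Let F x := b + mul b (q *: b + mul b x).

Lemma Sid N : series u N.+3 = F (series v N).
Proof.
rewrite /series /= big_nat_recl // big_nat_recl // big_nat_recl //.
rewrite /u p0 scaler0 add0r p1 (_ : 1`! = 1)%N // invr1 scale1r pSS p1 /F.
congr (_ + _); rewrite (mDr hmul) (mZr hmul); congr (_ + _).
rewrite (m_sumr hmul) (m_sumr hmul); apply: eq_bigr => i _.
by rewrite /v !(mZr hmul) -!pSS.
Qed.

Lemma geo_sum (d : R[i]) m n : 0 <= d -> d *+ 2 <= 1 ->
  \sum_(m <= k < m + n) d ^+ k + d ^+ (m + n) *+ 2 <= d ^+ m *+ 2.
Proof.
move=> d0 d2; elim: n => [|n IH]; first by rewrite addn0 big_geq // add0r.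
apply: le_trans IH; rewrite addnS big_nat_recr ?leq_addr //= -addrA lerD2l.
rewrite exprS -mulrnAl [in X in _ <= X]mulr2n lerD2l.
by rewrite -[X in _ <= X]mul1r ler_wpM2r // exprn_ge0.
Qed.

Lemma v_cvg : cvgn (series v).
Proof.
apply/cauchy_cvgP/cauchy_seriesP => e e0.
have e2 : 0 < e + 2 by rewrite ltr_wpDl // ?ltW.
set t := e / (e + 2).
have t0 : 0 < t by rewrite divr_gt0.
have t1 : t <= 1 by rewrite ler_pdivrMr // mul1r lerDl ler0n.
have te : t < e.
  by rewrite ltr_pdivrMr // ltr_pMr // ltr_wpDl ?ltW // ltr1n.
set d := t / 2.
have d0 : 0 < d by rewrite divr_gt0.
have d2 : d *+ 2 = t by rewrite mulr2n -splitr.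
have d1 : d <= 1 by rewrite (le_trans _ t1) // -d2 mulr2n lerDl ltW.
have h := tn_bound d0.
case: h => K _ hK.
rewrite -near2_pair; near=> n1 n2 => /=.
have n1K : (K.+1 <= n1)%N by near: n1; exact: nbhs_infty_ge.
have [n12|n21] := leqP n1 n2; last by rewrite big_geq ?normr0 // ltnW.
apply: (le_lt_trans (ler_norm_sum _ _ _)).
apply: (@le_lt_trans _ _ (\sum_(n1 <= k < n2) d ^+ k)).
  rewrite big_nat_cond [X in _ <= X]big_nat_cond; apply: ler_sum => k /andP[/andP[k1 k2] _].
  rewrite /v normrZ ger0_norm ?invr_ge0 ?ler0n //.
  apply: (@le_trans _ _ (1 * d ^+ k.+1)).
    apply: ler_pM; rewrite ?invr_ge0 ?ler0n //.
    by rewrite invf_le1 ?ltr0n ?fact_gt0 // ler1n fact_gt0.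
    apply: hK => /=; apply: (leq_trans (leqnSn K)); apply: (leq_trans n1K); exact: (leq_trans k1 (leqnSn k)).
  by rewrite mul1r exprS -[X in _ <= X]mul1r ler_wpM2r // ?exprn_ge0 ?ltW.
apply: (@le_lt_trans _ _ (d ^+ n1 *+ 2)).
  have := geo_sum n1 (n2 - n1) (ltW d0); rewrite d2 subnKC // => /(_ t1).
  by apply: le_trans; rewrite lerDl mulrn_wge0 // exprn_ge0 ?ltW.
apply: (le_lt_trans _ te); rewrite -d2 lerMn2r /=.
have e1 : n1 = (n1.-1).+1 by rewrite prednK // (leq_trans _ n1K).
rewrite e1 exprS -[X in _ <= X]mulr1; apply: ler_wpM2l; first exact: ltW.
exact: exprn_ile1 (ltW d0) d1.
Unshelve. all: by end_near.
Qed.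

Let w := limn (series v).
Lemma hv : series v @ \oo --> w. Proof. exact: v_cvg. Qed.

Lemma expE : expm1 mul b = F w.
Proof.
rewrite /expm1; apply: cvg_lim; first exact: norm_hausdorff.
rewrite -(cvg_shiftn 3).
have -> : [sequence series (fun n => (n`!%:R : R[i])^-1 *: (bpow mul b n).2) (n + 3)]_n
    = (fun N => F (series v N)).
  by apply: funext => N; change (series u (N + 3)%N = F (series v N)); rewrite addn3 Sid.
apply: (@lip_cvg R A F (`|b| * `|b|) (series v) w (mulr_ge0 (normr_ge0 _) (normr_ge0 _)) _ hv).
move=> x; have -> : F w - F x = mul b (mul b (w - x)).
  by rewrite /F opprD addrACA subrr add0r -(mBr hmul) opprD addrACA subrr add0r -(mBr hmul).
apply: (le_trans (m_norm hmul _ _)); rewrite -mulrA ler_wpM2l //.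
exact: m_norm.
Qed.

Lemma wcomm : mul b w = mul w b.
Proof.
have h1 := @lip_cvg R A (mul b) `|b| (series v) w (normr_ge0 _)
  (fun x => ltac:(rewrite -(mBr hmul); exact: m_norm)) hv.
have h2 := @lip_cvg R A (mul^~ b) `|b| (series v) w (normr_ge0 _)
  (fun x => ltac:(rewrite -(mBl hmul) mulrC; exact: m_norm)) hv.
have e : (mul b \o series v) = (mul^~ b \o series v).
  apply: funext => N /=; rewrite (m_sumr hmul) (m_suml hmul); apply: eq_bigr => k _.
  by rewrite /v (mZr hmul) (mZl hmul) pcomm.
rewrite e in h1.
by rewrite -(cvg_lim (@norm_hausdorff _ _) h1) -(cvg_lim (@norm_hausdorff _ _) h2).
Qed.

Let Q : U := (q, w).
Lemma cBQ : GRing.comm B Q.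
Proof.
rewrite /GRing.comm /GRing.mul /= /umul /= mul0r mulr0 !scale0r add0r addr0.
by rewrite wcomm.
Qed.

Lemma hE : ((0, expm1 mul b) : U) = B * (1 + B * Q).
Proof.
rewrite expE /F /GRing.mul /= /umul /= !mul0r !scale0r !add0r addr0 scale1r.
done.
Qed.

Lemma main_d d : bpow mul b d = (0, 0) <-> bpow mul (expm1 mul b) d = (0, 0).
Proof.
rewrite bpowE /bpow (@upowE _ _ _ hmul) hE.
change (B ^+ d = 0 <-> (B * (1 + B * Q)) ^+ d = 0).
have [P [cBP ->]] := alg d cBQ; split; first by move=> ->; rewrite mul0r addr0.
move=> h0.
have hY : B ^+ d * (B * - P) = B ^+ d.
  by rewrite mulrN mulrN; apply/esym/eqP; rewrite -addr_eq0 h0.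
have cBP' : GRing.comm B (- P) by apply: commrN.
have hk k : B ^+ d = B ^+ d * (B ^+ k * (- P) ^+ k).
  rewrite -exprMn_comm //; elim: k => [|k IH]; first by rewrite expr0 mulr1.
  by rewrite exprS mulrA hY.
set M := N (- P); set a := N (B ^+ d).
have M0 : 0 <= M by exact: N_ge0.
have a0 : 0 <= a by exact: N_ge0.
have M1 : 0 < M + 1 by rewrite ltr_wpDl.
set de := 2^-1 / (M + 1).
have de0 : 0 < de by rewrite divr_gt0 // invr_gt0 ltr0n.
have deM : de * M <= 2^-1.
  rewrite /de mulrAC ler_pdivrMr //; apply: ler_wpM2l; first by rewrite invr_ge0 ler0n.
  by rewrite lerDl ler01.
have deM0 : 0 <= de * M by rewrite mulr_ge0 // ltW.
case: (tn_bound de0) => K _ hK.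
have hpk : `|p K.+1| <= de ^+ K.+1 by apply: hK => /=.
have NB : N (B ^+ K.+1) = `|p K.+1|.
  by rewrite -bpowE bpowS /N /= normr0 add0r.
have : a <= a * 2^-1.
  rewrite {1}/a (hk K.+1); apply: (le_trans (N_mul _ _)).
  apply: ler_wpM2l => //; apply: (le_trans (N_mul _ _)).
  apply: (le_trans (ler_pM _ _ (le_refl _) (N_exp _ _))); rewrite ?N_ge0 ?exprn_ge0 //.
  rewrite NB; apply: (le_trans (ler_pM _ _ hpk (le_refl _))); rewrite ?exprn_ge0 //.
  rewrite -exprMn exprS -[X in _ <= X]mulr1; apply: ler_pM => //; rewrite ?exprn_ge0 //.
  apply: exprn_ile1 => //; apply: le_trans deM _.
  by rewrite invf_le1 ?ltr0n // ler1n.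
move=> ha.
have : a / 2 + a / 2 <= a / 2 by rewrite -splitr.
rewrite gerDl pmulr_lle0 ?invr_gt0 ?ltr0n // => a0'.
have /N_eq0 : a = 0 by apply/le_anti; rewrite a0 a0'.
done.
Qed.
End Main.

Unset Implicit Arguments.

Theorem lemma5 (R : realType) (A : completeNormedModType R[i])
    (mul : A -> A -> A) (hmul : banach_mul mul) (b : A)
    (htn : topologically_nilpotent mul b) :
  (nilpotent_el mul b <-> nilpotent_el mul (expm1 mul b)) /\
  (forall d : nat, bpow mul b d = (0, 0) <-> bpow mul (expm1 mul b) d = (0, 0)).
Proof.
have md := main_d hmul htn; split => //.
by split => -[d hd]; exists d; apply/md.
Qed.
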